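(* Let $p$ be a prime and let $H(X)=\prod_{j=0}^{p-1}G_p(X-j)$ (which equals $\prod_{i=0}^{p^2-1}(X-i)$). Then for each $k\in\{0,\dots,p-1\}$, $$H(X)\equiv -G_p(X-k)\pmod{(p,X-k)^{p+1}}.$$
   Context: $G_p(X)=\prod_{h=0}^{p-1}(X-hp)$. *)

(* Defs.v *)
From HB Require Import structures.
From mathcomp Require Import all_boot all_order all_algebra.
Set Implicit Arguments. Unset Strict Implicit. Unset Printing Implicit Defensive.
Import Order.TTheory GRing.Theory Num.Theory.
Local Open Scope ring_scope.

Definition Gp (p : nat) : {poly int} :=
  \prod_(h < p) ('X - ((h * p)%N)%:R%:P).

Definition shift (f : {poly int}) (k : nat) : {poly int} :=
  f \Po ('X - k%:R%:P).

Definition Hp (p : nat) : {poly int} := \prod_(j < p) shift (Gp p) j.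

(* Membership in the ideal (a, X - c)^n of Z[X]: this ideal is generated by
   the products a^i (X - c)^(n - i), 0 <= i <= n, so f lies in it iff f is a
   Z[X]-linear combination of these generators. *)
Definition in_ideal_pow (a c : int) (n : nat) (f : {poly int}) : Prop :=
  exists q : nat -> {poly int},
    f = \sum_(i < n.+1) (a%:P ^+ i * ('X - c%:P) ^+ (n - i)%N) * q i.

Definition congr_ideal_pow (a c : int) (n : nat) (f g : {poly int}) : Prop :=
  in_ideal_pow a c n (f - g).

(* Main.v *)
Require Import Defs.
From HB Require Import structures.
From mathcomp Require Import all_boot all_order all_algebra.
From mathcomp Require Import zify ring.
From mathcomp Require Import finfield.
Import GRing.Theory.
Local Open Scope ring_scope.

Section Ideal.
Variables (a c : int).
Local Notation J := (in_ideal_pow a c).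
Local Notation Y := ('X - c%:P).

Lemma J0 n : J n 0.
Proof. exists (fun _ => 0); by rewrite big1 // => i _; rewrite mulr0. Qed.

Lemma JD n f g : J n f -> J n g -> J n (f + g).
Proof.
move=> [q1 ->] [q2 ->]; exists (fun i => q1 i + q2 i).
by rewrite -big_split /=; apply: eq_bigr => i _; rewrite mulrDr.
Qed.

Lemma JM n f r : J n f -> J n (f * r).
Proof.
move=> [q1 ->]; exists (fun i => q1 i * r).
by rewrite big_distrl /=; apply: eq_bigr => i _; rewrite mulrA.
Qed.

Lemma Jsum n (I : Type) (s : seq I) (P : pred I) (F : I -> {poly int}) :
  (forall i, P i -> J n (F i)) -> J n (\sum_(i <- s | P i) F i).
Proof. move=> H; apply: (big_ind (J n)) => //; [exact: J0 | exact: JD]. Qed.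

Lemma Jgen n l : (l <= n)%N -> J n (a%:P ^+ l * Y ^+ (n - l)).
Proof.
move=> hl; exists (fun i => if i == l then 1 else 0).
rewrite (bigD1 (Ordinal (hl : (l < n.+1)%N))) //= eqxx mulr1 big1 ?addr0 //.
move=> i /negPf; rewrite -val_eqE /= => ->; by rewrite mulr0.
Qed.

Lemma JMM m n f g : J m f -> J n g -> J (m + n) (f * g).
Proof.
move=> [q1 ->] [q2 ->]; rewrite big_distrl /=; apply: Jsum => i _.
rewrite big_distrr /=; apply: Jsum => j _.
have hi := ltn_ord i; have hj := ltn_ord j.
have -> : a%:P ^+ i * Y ^+ (m - i) * q1 i * (a%:P ^+ j * Y ^+ (n - j) * q2 j)
   = a%:P ^+ (i + j) * Y ^+ (m + n - (i + j)) * (q1 i * q2 j).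
  have -> : (m + n - (i + j) = (m - i) + (n - j))%N by lia.
  rewrite !exprD; ring.
by apply: JM; apply: Jgen; lia.
Qed.

Lemma Jprod n (F : nat -> {poly int}) :
  (forall i, (i < n)%N -> J 1 (F i)) -> J n (\prod_(i < n) F i).
Proof.
elim: n => [|n IH] H.
  by rewrite big_ord0; exists (fun _ => 1); rewrite big_ord1 /= !expr0 !mulr1.
rewrite big_ord_recr /= -addn1; apply: JMM; first by apply: IH => i hi; apply: H; lia.
exact: H.
Qed.

Lemma J1 (f : {poly int}) : (a %| f.[c])%Z -> J 1 f.
Proof.
move=> /dvdzP [d hd].
have : root (f - f.[c]%:P) c by rewrite rootE hornerD hornerN hornerC subrr.
move=> /factor_theorem [q hq].
have -> : f = Y * q + a%:P * d%:P.
  by rewrite -polyCM [a * d]mulrC -hd [Y * q]mulrC -hq subrK.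
apply: JD.
  by have := @Jgen 1 0 (leq0n 1); rewrite expr0 mul1r subn0 expr1 => /JM; apply.
by have := @Jgen 1 1 (leqnn 1); rewrite subnn expr0 mulr1 expr1 => /JM; apply.
Qed.

End Ideal.
Section Fp.
Variable p : nat.
Hypothesis hp : prime p.

Lemma prodFp (P : pred 'F_p) (F : 'F_p -> 'F_p) :
  \prod_(x : 'F_p | P x) F x = \prod_(i < p | P i%:R) F i%:R.
Proof.
rewrite (eq_bigr (fun x : 'F_p => F (nat_of_ord x)%:R)); last by move=> x _; rewrite natr_Zp.
rewrite (eq_bigl (fun x : 'F_p => P (nat_of_ord x)%:R)); last by move=> x; rewrite natr_Zp.
rewrite -(big_mkord (fun i => P i%:R) (fun i => F i%:R)).
rewrite -(big_mkord (fun i => P i%:R) (fun i => F i%:R)).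
have -> : index_iota 0 (Zp_trunc (pdiv p)).+2 = index_iota 0 p by rewrite Fp_cast.
by [].
Qed.

Lemma Fp_eq (i j : nat) : (i < p)%N -> (j < p)%N -> ((i%:R : 'F_p) == j%:R) = (i == j).
Proof.
move=> hi hj; apply/idP/idP; last by move/eqP->.
move/eqP/(congr1 (@nat_of_ord _)); rewrite (val_Fp_nat hp i) (val_Fp_nat hp j) !modn_small // => ->; by [].
Qed.

Lemma Fp_wilson : \prod_(y : 'F_p | y != 0) y = -1.
Proof.
rewrite prodFp.
have p1 := prime_gt1 hp.
rewrite (eq_bigl (fun i : 'I_p => (nat_of_ord i) != 0%N)); last first.
  by move=> i; rewrite -[0 : 'F_p]/(0%:R) Fp_eq ?prime_gt0.
case: p hp p1 => [|p'] // hp' _.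
rewrite big_mkcond big_ord_recl /= mul1r.
rewrite (eq_bigr (fun i : 'I_p' => (i.+1)%:R)) // -natr_prod.
have -> : (\prod_(i < p') i.+1 = p'`!)%N.
  by rewrite fact_prod big_add1 /= big_mkord.
have : (p'.+1 %| (p'`!).+1)%N by have := Wilson (prime_gt1 hp'); rewrite hp' /=.
rewrite (dvdn_pcharf (pchar_Fp hp')) mulrS => /eqP h.
by apply/eqP; rewrite -subr_eq0 opprK addrC h.
Qed.

Lemma Fp_prod_diff k : (k < p)%N ->
  \prod_(j < p | nat_of_ord j != k) ((k%:R : 'F_p) - j%:R) = -1.
Proof.
move=> hk; rewrite -Fp_wilson.
rewrite (reindex_inj (h := fun x : 'F_p => k%:R - x)); last first.
  by move=> x y /= /eqP; rewrite -subr_eq0 opprB addrC subrKA subr_eq0 => /eqP.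
rewrite prodFp; apply: eq_bigl => i.
by rewrite subr_eq0 Fp_eq // eq_sym.
Qed.

End Fp.

Theorem mainTheorem17 (p : nat) (hp : prime p) (k : nat) (hk : (k < p)%N) :
  congr_ideal_pow (p%:Z) (k%:Z) p.+1 (Hp p) (- shift (Gp p) k).
Proof.
rewrite /congr_ideal_pow /Hp (bigD1 (Ordinal hk)) //= opprK.
rewrite -[X in _ + X]mulr1 -mulrDr -addn1; apply: JMM.
  rewrite /shift /Gp rmorph_prod.
  apply: (@Jprod _ _ p (fun i => ('X - ((i * p)%N)%:R%:P) \Po ('X - k%:R%:P))) => i _.
  apply: J1; rewrite horner_comp !hornerE.
  apply/dvdzP; exists (- i%:R); rewrite natrM !natz; ring.
apply: J1.
rewrite (dvdz_pcharf (pchar_Fp hp)) hornerD hornerC horner_prod rmorphD rmorph1 rmorph_prod.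
rewrite (eq_bigl (fun i : 'I_p => nat_of_ord i != k)); last first.
  by move=> i; rewrite -val_eqE.
rewrite (eq_bigr (fun i : 'I_p => (k%:R : 'F_p) - (nat_of_ord i)%:R)).
  by rewrite Fp_prod_diff // addNr.
move=> i _.
rewrite /shift horner_comp /Gp horner_prod rmorph_prod /=.
rewrite (eq_bigr (fun _ => (k%:R : 'F_p) - (nat_of_ord i)%:R)); last first.
  move=> h _; rewrite !hornerE !rmorphB /= mulrz_nat !rmorph_nat natrM pchar_Fp_0 // mulr0 subr0.
  by [].
rewrite prodr_const card_ord -[X in _ ^+ X](card_Fp hp) expf_card //.
Qed.
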